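(* Let $S$ be a semigroup with identity element and group of units $G$, and suppose $S\setminus G$ is a subsemigroup of $S$. Then $G$ is a completely isolated subsemigroup of $S$, and the map $T\mapsto T\cup G$ is a bijection from the set of completely isolated subsemigroups of $S$ that are disjoint from $G$ onto the set of completely isolated subsemigroups of $S$ that contain $G$ as a proper subsemigroup.
   Context: A subsemigroup $T$ of a semigroup $S$ is completely isolated if for all $a,b\in S$, $ab\in T$ implies $a\in T$ or $b\in T$. *)

(* Defs.v *)
(* abstract semigroups given by a carrier and an operation.
   Subsets of the carrier are predicates S -> Prop, compared with Leibniz
   equality (sets are extensional). *)

Section Semigroups.
Context {S : Type}.
Variable mul : S -> S -> S.

Definition associative_op : Prop :=
  forall x y z, mul x (mul y z) = mul (mul x y) z.

Definition is_identity (e : S) : Prop :=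
  forall x, mul e x = x /\ mul x e = x.

Definition units (e : S) : S -> Prop :=
  fun x => exists y, mul x y = e /\ mul y x = e.

Definition subsemigroup (T : S -> Prop) : Prop :=
  (exists x, T x) /\ (forall x y, T x -> T y -> T (mul x y)).

Definition completely_isolated (T : S -> Prop) : Prop :=
  subsemigroup T /\ (forall a b, T (mul a b) -> T a \/ T b).

End Semigroups.

Definition setU {S : Type} (A B : S -> Prop) : S -> Prop := fun x => A x \/ B x.
Definition setC {S : Type} (A : S -> Prop) : S -> Prop := fun x => ~ A x.
Definition disjoint {S : Type} (A B : S -> Prop) : Prop := forall x, A x -> B x -> False.
Definition subset {S : Type} (A B : S -> Prop) : Prop := forall x, A x -> B x.
Definition proper_subset {S : Type} (A B : S -> Prop) : Prop :=
  subset A B /\ exists x, B x /\ ~ A x.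

Definition bijection_between {X Y : Type} (Dom : X -> Prop) (Cod : Y -> Prop)
  (f : X -> Y) : Prop :=
  (forall x, Dom x -> Cod (f x)) /\
  (forall x1 x2, Dom x1 -> Dom x2 -> f x1 = f x2 -> x1 = x2) /\
  (forall y, Cod y -> exists x, Dom x /\ f x = y).

(* Main.v *)
Require Import Defs.
From Stdlib Require Import Classical FunctionalExtensionality PropExtensionality.

Theorem mainTheorem19 (S : Type) (mul : S -> S -> S) (e : S)
  (Hassoc : associative_op mul) (He : is_identity mul e)
  (Hcompl : subsemigroup mul (setC (units mul e))) :
  let G := units mul e in
  completely_isolated mul G /\
  bijection_between
    (fun T : S -> Prop => completely_isolated mul T /\ disjoint T G)
    (fun U : S -> Prop => completely_isolated mul U /\ proper_subset G U)
    (fun T : S -> Prop => setU T G).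
Proof.
  intros G.
  unfold associative_op, is_identity in *.
  destruct Hcompl as [_ Hc].
  assert (HeG : G e) by (exists e; split; apply He).
  assert (HGmul : forall x y, G x -> G y -> G (mul x y)).
  { intros x y [x' [Hx1 Hx2]] [y' [Hy1 Hy2]]. exists (mul y' x'). split.
    - rewrite <- Hassoc. rewrite (Hassoc y y' x'). rewrite Hy1.
      rewrite (proj1 (He x')). exact Hx1.
    - rewrite <- Hassoc. rewrite (Hassoc x' x y). rewrite Hx2.
      rewrite (proj1 (He y)). exact Hy2. }
  assert (HGinv : forall x, G x -> exists y, G y /\ mul x y = e /\ mul y x = e).
  { intros x [y [H1 H2]]. exists y. split; [exists x; split; assumption| split; assumption]. }
  assert (HGiso : forall a b, G (mul a b) -> G a \/ G b).
  { intros a b H. destruct (classic (G a)) as [Ha|Ha]; [left; exact Ha|].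
    destruct (classic (G b)) as [Hb|Hb]; [right; exact Hb|].
    exfalso. exact (Hc a b Ha Hb H). }
  assert (Hrm : forall t g, G g -> t = mul (mul t g) (match HGinv g with _ => t end) -> True) by auto.
  clear Hrm.
  assert (HrT : forall T : S -> Prop, completely_isolated mul T -> disjoint T G ->
            forall t g, T t -> G g -> T (mul t g) /\ T (mul g t)).
  { intros T [[_ HTc] HTi] HTd t g Ht Hg.
    destruct (HGinv g Hg) as [gi [Hgi [H1 H2]]]. split.
    - assert (Heq : t = mul (mul t g) gi).
      { rewrite <- Hassoc, H1. symmetry. apply He. }
      rewrite Heq in Ht. destruct (HTi _ _ Ht) as [H|H]; [exact H|].
      exfalso; exact (HTd _ H Hgi).
    - assert (Heq : t = mul gi (mul g t)).
      { rewrite Hassoc, H2. symmetry. apply He. }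
      rewrite Heq in Ht. destruct (HTi _ _ Ht) as [H|H]; [|exact H].
      exfalso; exact (HTd _ H Hgi). }
  split; [split; [split; [exists e; exact HeG| exact HGmul] | exact HGiso]|].
  split; [|split].
  - intros T [HT HTd]. pose proof (HrT T HT HTd) as Hr.
    destruct HT as [[[t Ht] HTc] HTi]. split.
    + split; [split|].
      * exists e; right; exact HeG.
      * intros x y [Hx|Hx] [Hy|Hy]; unfold setU.
        -- left; apply HTc; assumption.
        -- left; apply (Hr x y Hx Hy).
        -- left; apply (Hr y x Hy Hx).
        -- right; apply HGmul; assumption.
      * intros a b [H|H].
        -- destruct (HTi a b H); [left; left|right; left]; assumption.
        -- destruct (HGiso a b H); [left; right|right; right]; assumption.
    + split.
      * intros x Hx; right; exact Hx.
      * exists t; split; [left; exact Ht| intro H; exact (HTd t Ht H)].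
  - intros T1 T2 [_ D1] [_ D2] Heq.
    apply functional_extensionality; intro x; apply propositional_extensionality.
    assert (E : setU T1 G x = setU T2 G x) by (rewrite Heq; reflexivity).
    unfold setU in E. split; intro H.
    + assert (H' : T2 x \/ G x) by (rewrite <- E; left; exact H).
      destruct H' as [H'|H']; [exact H'| exfalso; exact (D1 x H H')].
    + assert (H' : T1 x \/ G x) by (rewrite E; left; exact H).
      destruct H' as [H'|H']; [exact H'| exfalso; exact (D2 x H H')].
  - intros U [[[_ HUc] HUi] [HGU [u [Hu Hnu]]]].
    exists (fun x => U x /\ ~ G x). split; [split; [split; [split|]|]|].
    + exists u; split; assumption.
    + intros x y [Hx Hx'] [Hy Hy']. split; [apply HUc; assumption|].
      exact (Hc x y Hx' Hy').
    + intros a b [Hab Hnab].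
      destruct (HUi a b Hab) as [Ha|Hb].
      * destruct (classic (G a)) as [Ga|Ga]; [|left; split; assumption].
        right. destruct (HGinv a Ga) as [ai [Gai [H1 H2]]].
        assert (Heq : b = mul ai (mul a b)).
        { rewrite Hassoc, H2. symmetry. apply He. }
        split.
        -- rewrite Heq. apply HUc; [apply HGU; exact Gai| exact Hab].
        -- intro Gb. apply Hnab. apply HGmul; assumption.
      * destruct (classic (G b)) as [Gb|Gb]; [|right; split; assumption].
        left. destruct (HGinv b Gb) as [bi [Gbi [H1 H2]]].
        assert (Heq : a = mul (mul a b) bi).
        { rewrite <- Hassoc, H1. symmetry. apply He. }
        split.
        -- rewrite Heq. apply HUc; [exact Hab| apply HGU; exact Gbi].
        -- intro Ga. apply Hnab. apply HGmul; assumption.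
    + intros x [_ H] H'. exact (H H').
    + apply functional_extensionality; intro x; apply propositional_extensionality.
      unfold setU. split.
      * intros [[H _]|H]; [exact H| apply HGU; exact H].
      * intro H. destruct (classic (G x)) as [Gx|Gx]; [right; exact Gx| left; split; assumption].
Qed.
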